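(* Let $G$ be a locally compact abelian group (written additively), let $X$ be a topological vector space over $\mathbf{C}$, and let $J\subseteq G$ be a subsemigroup with non-empty interior such that $G=J-J=\{u-v: u,v\in J\}$. Then for each $n\in\mathbf{Z}_+$ the restriction map $r:P^{n}(G,X)\to P^{n}(J,X)$, $p\mapsto p|_J$, is a linear bijection. In particular, every polynomial $q:J\to X$ has a unique extension to a polynomial $p:G\to X$.
   Context: $\mathbf{Z}_+=\{0,1,2,\dots\}$. For an abelian topological semigroup $S$ (e.g. $J$ or $G$) and a topological vector space $X$, a continuous function $p:S\to X$ is a polynomial of degree at most $n$ if for all $s,t\in S$ there exist $a_0(s,t),\dots,a_n(s,t)\in X$ with $p(s+mt)=\sum_{j=0}^n a_j(s,t)m^j$ for all $m\in\mathbf{Z}_+$ (i.e. $m\mapsto p(s+mt)$ is a polynomial in $m$ of degree at most $n$). $P^n(S,X)$ denotes the space of all such polynomials. *)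

(* Defs.v *)
From HB Require Import structures.
From mathcomp Require Import all_boot all_order all_algebra.
From mathcomp Require Import all_classical all_reals all_analysis.
From mathcomp Require Import complex.
Set Implicit Arguments. Unset Strict Implicit. Unset Printing Implicit Defensive.
Import Order.TTheory GRing.Theory Num.Theory.
Local Open Scope classical_set_scope.
Local Open Scope ring_scope.

(* [is_poly n S p]: the restriction of p : G -> X to S is a polynomial of
   degree at most n on S (S a subsemigroup, with the subspace topology):
   p is continuous on S, and for all s, t in S there are a_0..a_n in X with
   p (s + m t) = sum_j a_j m^j for every m in Z_+. *)
Definition is_poly (R : realType) (G : topologicalZmodType)
    (X : topologicalLmodType R[i]) (n : nat) (S : set G) (p : G -> X) : Prop :=
  {within S, continuous p} /\
  forall s t : G, S s -> S t ->
    exists a : 'I_n.+1 -> X,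
      forall m : nat, p (s + t *+ m) = \sum_(j < n.+1) ((m%:R : R[i]) ^+ j) *: a j.

Definition subsemigroup (G : zmodType) (J : set G) : Prop :=
  forall u v, J u -> J v -> J (u + v).

(* Main.v *)
Require Import Defs.
From HB Require Import structures.
From mathcomp Require Import all_boot all_order all_algebra.
From mathcomp Require Import all_classical all_reals all_analysis.
From mathcomp Require Import complex.
Set Implicit Arguments. Unset Strict Implicit. Unset Printing Implicit Defensive.
Import Order.TTheory GRing.Theory Num.Theory.
Local Open Scope classical_set_scope.
Local Open Scope ring_scope.


Definition Tsum (K : numFieldType) (N : nat) (g : nat -> K) : K :=
  \sum_(k < N.+1) ((-1) ^+ k * 'C(N, k)%:R) * g k.

Lemma Tsum_succ (K : numFieldType) N (g : nat -> K) :
  Tsum N.+1 g = Tsum N (fun k => g k - g k.+1).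
Proof.
rewrite /Tsum big_ord_recl /= expr0 mul1r bin0.
under eq_bigr do rewrite /bump /= binS natrD mulrDr mulrDl.
rewrite big_split /= addrA.
have -> : 1%:R * g 0%N + \sum_(i < N.+1) (-1) ^+ (1 + i) * 'C(N, i.+1)%:R * g (1 + i)%N
   = \sum_(k < N.+1) (-1) ^+ k * 'C(N, k)%:R * g k.
  rewrite [RHS]big_ord_recl /= expr0 mul1r bin0.
  congr (_ + _); rewrite big_ord_recr /= bin_small // mulr0 mul0r addr0.
  by apply: eq_bigr => i _; rewrite /bump /=.
rewrite -big_split /=; apply: eq_bigr => i _.
rewrite add1n exprS mulN1r !mulNr mulrBr.
by [].
Qed.

Lemma Tsum_pow (K : numFieldType) N : forall j (x : K), (j < N)%N ->
  Tsum N (fun k => (x + k%:R) ^+ j) = 0.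
Proof.
elim: N => [|N IH] j x hj; first by rewrite ltn0 in hj.
rewrite Tsum_succ.
have E : forall k : nat, (x + k%:R) ^+ j - (x + k.+1%:R) ^+ j =
    - \sum_(i < j) (x + k%:R) ^+ i *+ 'C(j, i).
  move=> k; rewrite -natr1 addrA exprD1n big_ord_recr /= binn mulr1n.
  by rewrite opprD addrCA subrr addr0.
rewrite (_ : (fun k => _) = fun k : nat => - \sum_(i < j) (x + k%:R) ^+ i *+ 'C(j, i)); last first.
  by apply: funext => k; exact: E.
rewrite /Tsum.
under eq_bigr do rewrite mulrN mulr_sumr.
rewrite sumrN exchange_big /= big1 ?oppr0 // => i _.
rewrite (eq_bigr (fun k : 'I_N.+1 => ((-1)^+k * 'C(N,k)%:R * (x + k%:R)^+i) *+ 'C(j,i))); last by move=> k _; rewrite -mulrnAr.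
rewrite sumrMnl.
have hi : (i < N)%N by apply: leq_trans (ltn_ord i) _.
by have := IH i x hi; rewrite /Tsum => ->; rewrite mul0rn.
Qed.

Definition cf (K : numFieldType) (n k : nat) : K := (-1) ^+ k * 'C(n.+1, k)%:R.

Definition Dz (K : numFieldType) (X : lmodType K) (n : nat) (f : nat -> X) (m : nat) : X :=
  \sum_(k < n.+2) cf K n k *: f (m + k)%N.

Definition PolyN (K : numFieldType) (X : lmodType K) (n : nat) (f : nat -> X) : Prop :=
  exists a : 'I_n.+1 -> X, forall m : nat, f m = \sum_(j < n.+1) ((m%:R : K) ^+ j) *: a j.

Lemma Poly_Dz (K : numFieldType) (X : lmodType K) n (f : nat -> X) :
  PolyN n f -> forall m, Dz n f m = 0.
Proof.
move=> [a ha] m; rewrite /Dz.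
under eq_bigr do rewrite ha scaler_sumr.
rewrite exchange_big /= big1 // => j _.
under eq_bigr do rewrite scalerA.
rewrite -scaler_suml.
have := @Tsum_pow K n.+1 j (m%:R) (ltn_ord j).
rewrite /Tsum => H.
rewrite (eq_bigr (fun k : 'I_n.+2 => (-1) ^+ k * 'C(n.+1, k)%:R * (m%:R + k%:R) ^+ j)).
  by rewrite H scale0r.
by move=> k _; rewrite natrD.
Qed.

Lemma cf_last_neq0 (K : numFieldType) n : cf K n n.+1 != 0.
Proof.
by rewrite /cf binn mulr1 signr_eq0.
Qed.

Lemma Dz_Poly (K : numFieldType) (X : lmodType K) n (f : nat -> X) :
  (forall m, Dz n f m = 0) -> PolyN n f.
Proof.
move=> hf.
pose V : 'M[K]_n.+1 := \matrix_(i, j) ((i : nat)%:R ^+ j).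
have hV : V \in unitmx.
  have -> : V = (Vandermonde n.+1 (\row_(j < n.+1) ((j : nat)%:R : K)))^T.
    by apply/matrixP => i j; rewrite !mxE.
  rewrite unitmxE det_tr det_Vandermonde unitfE.
  apply/prodf_neq0 => i _; apply/prodf_neq0 => j hij.
  by rewrite !mxE subr_eq0 eqr_nat neq_ltn hij orbT.
pose W := invmx V.
pose a := fun j : 'I_n.+1 => \sum_(i < n.+1) W j i *: f i.
exists a.
pose g := fun m : nat => \sum_(j < n.+1) ((m%:R : K) ^+ j) *: a j.
have hg : forall m, Dz n g m = 0 by apply: Poly_Dz; exists a.
have base : forall i : 'I_n.+1, f i = g i.
  move=> i; rewrite /g /a.
  under eq_bigr do rewrite scaler_sumr.
  rewrite exchange_big /=.
  under eq_bigr do (under eq_bigr do rewrite scalerA; rewrite -scaler_suml).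
  have E : forall k : 'I_n.+1, \sum_(j < n.+1) (i%:R : K) ^+ j * W j k = (V *m W) i k.
    by move=> k; rewrite !mxE; apply: eq_bigr => j _; rewrite mxE.
  under eq_bigr do rewrite E.
  rewrite mulmxV // (bigD1 i) //= big1 ?addr0; first by rewrite mxE eqxx scale1r.
  by move=> k hk; rewrite mxE eq_sym (negbTE hk) scale0r.
suff : forall m, f m = g m by [].
elim/ltn_ind => m IH.
case: (ltnP m n.+1) => hm; first by have := base (Ordinal hm).
have -> : m = ((m - n.+1) + n.+1)%N by rewrite subnK.
set m0 := (m - n.+1)%N.
have E1 := hf m0; have E2 := hg m0.
rewrite /Dz big_ord_recr /= in E1; rewrite /Dz big_ord_recr /= in E2.
have HS : \sum_(i < n.+1) cf K n i *: f (m0 + i)%N = \sum_(i < n.+1) cf K n i *: g (m0 + i)%N.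
  apply: eq_bigr => i _; rewrite IH //.
  apply: (@leq_trans (m0 + n.+1)%N); first by rewrite ltn_add2l.
  by rewrite /m0 subnK.
apply: (scalerI (cf_last_neq0 K n)).
apply: (addrI (\sum_(i < n.+1) cf K n i *: f (m0 + i)%N)).
by rewrite E1 HS E2.
Qed.


Definition Ext (K : numFieldType) (X : lmodType K) (n : nat) (f : nat -> X) : X :=
  \sum_(k < n.+1) (- cf K n k.+1) *: f k.+1.

Lemma Dz_Ext (K : numFieldType) (X : lmodType K) n (f : nat -> X) :
  Dz n f 0 = 0 -> f 0%N = Ext n f.
Proof.
rewrite /Dz big_ord_recl /= /cf expr0 bin0 mul1r scale1r add0n => /eqP.
rewrite addr_eq0 => /eqP ->; rewrite /Ext -sumrN.
by apply: eq_bigr => i _; rewrite scaleNr add0n.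
Qed.

Lemma Poly_Ext (K : numFieldType) (X : lmodType K) n (f : nat -> X) :
  PolyN n f -> f 0%N = Ext n f.
Proof. by move=> /Poly_Dz H; apply: Dz_Ext. Qed.

Lemma Poly_shift (K : numFieldType) (X : lmodType K) n (f : nat -> X) d :
  PolyN n f -> PolyN n (fun m => f (m + d)%N).
Proof.
move=> /Poly_Dz H; apply: Dz_Poly => m; rewrite -[RHS](H (m + d)%N) /Dz.
by apply: eq_bigr => k _; rewrite addnAC.
Qed.

Lemma eq_Ext (K : numFieldType) (X : lmodType K) n (f g : nat -> X) :
  (forall k, f k.+1 = g k.+1) -> Ext n f = Ext n g.
Proof. by move=> H; apply: eq_bigr => k _; rewrite H. Qed.

Lemma Ext_swap (K : numFieldType) (X : lmodType K) n (F : nat -> nat -> X) :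
  Ext n (fun l => Ext n (fun k => F l k)) = Ext n (fun k => Ext n (fun l => F l k)).
Proof.
rewrite /Ext; under eq_bigr do rewrite scaler_sumr.
rewrite exchange_big /=; apply: eq_bigr => i _; rewrite scaler_sumr.
by apply: eq_bigr => j _; rewrite !scalerA mulrC.
Qed.

Lemma sum_Ext (K : numFieldType) (X : lmodType K) n M (d : nat -> K) (F : nat -> nat -> X) :
  \sum_(k < M) d k *: Ext n (F k) = Ext n (fun l => \sum_(k < M) d k *: F k l).
Proof.
rewrite /Ext; under eq_bigr do rewrite scaler_sumr.
rewrite exchange_big /=; apply: eq_bigr => i _; rewrite scaler_sumr.
by apply: eq_bigr => j _; rewrite !scalerA mulrC.
Qed.

Definition subsg (G : zmodType) (J : set G) : Prop :=
  forall u v, J u -> J v -> J (u + v).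

Lemma sg_mul (G : zmodType) (J : set G) : subsg J ->
  forall a b k, J a -> J b -> J (a + b *+ k).
Proof.
move=> hJ a b k ha hb; elim: k => [|k IH]; first by rewrite mulr0n addr0.
by rewrite mulrSr addrA; apply: hJ.
Qed.

Lemma sg_mulS (G : zmodType) (J : set G) : subsg J ->
  forall b k, J b -> J (b *+ k.+1).
Proof. by move=> hJ b k hb; rewrite mulrS; apply: sg_mul. Qed.


Definition polyJ (K : numFieldType) (X : lmodType K) (G : zmodType) n (J : set G) (q : G -> X) :=
  forall s t, J s -> J t -> PolyN n (fun m => q (s + t *+ m)).

Lemma ExtExpand (K : numFieldType) (X : lmodType K) (G : zmodType) n (J : set G) (q : G -> X)
  (hJ : subsg J) (hq : polyJ n J q) g w1 w2 :
  J w1 -> J w2 -> J (g + w2) ->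
  Ext n (fun l => q (g + w2 *+ l)) = Ext n (fun l => Ext n (fun k => q (g + w2 *+ l + w1 *+ k))).
Proof.
move=> h1 h2 h3; apply: eq_Ext => l.
have hb : J (g + w2 *+ l.+1) by rewrite mulrS addrA; apply: sg_mul.
have := Poly_Ext (hq _ _ hb h1); rewrite /= mulr0n addr0 => ->.
by [].
Qed.

Lemma Ext_indep (K : numFieldType) (X : lmodType K) (G : zmodType) n (J : set G) (q : G -> X)
  (hJ : subsg J) (hq : polyJ n J q) g w1 w2 :
  J w1 -> J (g + w1) -> J w2 -> J (g + w2) ->
  Ext n (fun l => q (g + w1 *+ l)) = Ext n (fun l => q (g + w2 *+ l)).
Proof.
move=> h1 h1' h2 h2'.
rewrite (ExtExpand hJ hq h2 h1 h1') (ExtExpand hJ hq h1 h2 h2') Ext_swap.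
by apply: eq_Ext => l; apply: eq_Ext => k; rewrite addrAC.
Qed.

Lemma zid1 (G : zmodType) (a b c d : G) : (a - b) + (c - d) + (b + d) = a + c.
Proof. by rewrite addrACA !subrK. Qed.

Lemma zid2 (G : zmodType) (a b c d e : G) : a + (b - c) + (d + (c + e)) = a + d + (b + e).
Proof.
rewrite !addrA [a + b - c + d]addrAC subrK.
by rewrite [a + b + d]addrAC.
Qed.

Definition pext (K : numFieldType) (X : lmodType K) (G : zmodType) n (q : G -> X) (wf : G -> G) (g : G) : X :=
  Ext n (fun k => q (g + wf g *+ k)).

Lemma pextE (K : numFieldType) (X : lmodType K) (G : zmodType) n (J : set G) (q : G -> X)
  (hJ : subsg J) (hq : polyJ n J q) (wf : G -> G) (hwf : forall g, J (wf g) /\ J (g + wf g)) g w :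
  J w -> J (g + w) -> pext n q wf g = Ext n (fun k => q (g + w *+ k)).
Proof. by move=> h1 h2; have [h3 h4] := hwf g; exact: (Ext_indep hJ hq). Qed.

Lemma pext_J (K : numFieldType) (X : lmodType K) (G : zmodType) n (J : set G) (q : G -> X)
  (hJ : subsg J) (hq : polyJ n J q) (wf : G -> G) (hwf : forall g, J (wf g) /\ J (g + wf g)) g :
  J g -> pext n q wf g = q g.
Proof.
move=> hg; have [h1 h2] := hwf g.
by have := Poly_Ext (hq _ _ hg h1); rewrite /= mulr0n addr0 => ->.
Qed.

Lemma Ext0 (K : numFieldType) (X : lmodType K) n : Ext n (fun _ => (0 : X)) = 0.
Proof. by rewrite /Ext big1 // => i _; rewrite scaler0. Qed.

Lemma pext_diff (K : numFieldType) (X : lmodType K) (G : zmodType) n (J : set G) (q : G -> X)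
  (hJ : subsg J) (hq : polyJ n J q) (wf : G -> G) (hwf : forall g, J (wf g) /\ J (g + wf g))
  (hgen : forall g : G, exists u v, J u /\ J v /\ g = u - v) s t :
  \sum_(k < n.+2) cf K n k *: pext n q wf (s + t *+ k) = 0.
Proof.
have [us [vs [hus [hvs hs]]]] := hgen s.
have [ut [vt [hut [hvt ht]]]] := hgen t.
have E : forall k, pext n q wf (s + t *+ k) =
    Ext n (fun l => q ((s + vs *+ l) + (ut + vt *+ l.-1) *+ k)).
  move=> k.
  have h1 : J (vs + vt *+ k) by apply: sg_mul.
  have h2 : J (s + t *+ k + (vs + vt *+ k)).
    by rewrite hs ht mulrnBl zid1; apply: sg_mul.
  rewrite (pextE hJ hq hwf h1 h2).
  apply: eq_Ext => l /=.
  rewrite ht mulrnBl mulrnDl -mulrnA mulnS mulrnDr.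
  by rewrite mulrnDl -mulrnA [(l * k)%N]mulnC zid2.
under eq_bigr do rewrite E.
rewrite (@sum_Ext K X n n.+2 (cf K n) (fun k l => q ((s + vs *+ l) + (ut + vt *+ l.-1) *+ k))) -[RHS](Ext0 X n); apply: eq_Ext => l /=.
have hB : J (s + vs *+ l.+1) by rewrite mulrS addrA hs subrK; apply: sg_mul.
have hD : J (ut + vt *+ l) by apply: sg_mul.
by have := Poly_Dz (hq _ _ hB hD) 0; rewrite /Dz.
Qed.


Lemma transl_cont (G : topologicalZmodType) (c : G) : continuous (fun z => z + c).
Proof.
move=> z.
apply: (@continuous2_cvg _ _ _ _ _ _ (fun x => x) (fun _ => c) (fun a b => a + b) z c).
- exact: (@add_continuous G (z, c)).
- exact: cvg_id.
- exact: cvg_cst.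
Qed.

Lemma int_addJ (G : topologicalZmodType) (J : set G) : subsg J ->
  forall x y, interior J x -> J y -> interior J (x + y).
Proof.
move=> hJ x y hx hy; rewrite /interior.
have hc : (fun z => z + - y) @ nbhs (x + y) --> x.
  by move: (@transl_cont _ (- y) (x + y)); rewrite /continuous_at /= addrK.
have := hc _ hx; rewrite /= nbhs_simpl /=.
apply: filterS => z hz; rewrite -(subrK y z); exact: hJ.
Qed.

Lemma int_addJ' (G : topologicalZmodType) (J : set G) : subsg J ->
  forall x y, J x -> interior J y -> interior J (x + y).
Proof. by move=> hJ x y hx hy; rewrite addrC; apply: int_addJ. Qed.

Lemma cvg_addX (R : realType) (X : topologicalLmodType R[i]) (T : Type) (F : set_system T)
  {FF : Filter F} (f g : T -> X) a b :
  f @ F --> a -> g @ F --> b -> (fun x => f x + g x) @ F --> a + b.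
Proof.
move=> hf hg.
apply: (@continuous2_cvg _ _ _ _ _ _ f g (fun a b => a + b) a b) => //.
exact: (@add_continuous X (a, b)).
Qed.

Lemma cvg_scaleX (R : realType) (X : topologicalLmodType R[i]) (T : Type) (F : set_system T)
  {FF : Filter F} (f : T -> X) a (c : R[i]) :
  f @ F --> a -> (fun x => c *: f x) @ F --> c *: a.
Proof.
move=> hf.
apply: (@continuous2_cvg _ (R[i]^o) _ _ _ _ (fun _ => c) f (fun a b => a *: b) c a) => //.
- exact: (@scale_continuous R[i] X (c, a)).
- exact: cvg_cst.
Qed.

Lemma cvg_sumX (R : realType) (X : topologicalLmodType R[i]) (T : Type) (F : set_system T)
  {FF : Filter F} M (f : nat -> T -> X) (a : nat -> X) :
  (forall i, f i @ F --> a i) ->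
  (fun x => \sum_(i < M) f i x) @ F --> \sum_(i < M) a i.
Proof.
move=> hf; elim: M => [|M IH].
  rewrite big_ord0; under eq_fun do rewrite big_ord0; exact: cvg_cst.
rewrite big_ord_recr /=; under eq_fun do rewrite big_ord_recr /=.
exact: cvg_addX.
Qed.

Theorem theorem1p5 (R : realType) (G : topologicalZmodType)
    (X : topologicalLmodType R[i]) (J : set G)
    (hG_lc : locally_compact [set: G]) (hG_T2 : hausdorff_space G)
    (hJ_semi : subsemigroup J) (hJ_int : interior J !=set0)
    (hJ_gen : forall g : G, exists u v, J u /\ J v /\ g = u - v)
    (n : nat) :
  (forall p : G -> X, is_poly n [set: G] p -> is_poly n J p) /\
  (forall q : G -> X, is_poly n J q ->
     exists p : G -> X, is_poly n [set: G] p /\ (forall x, J x -> p x = q x)) /\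
  (forall p1 p2 : G -> X, is_poly n [set: G] p1 -> is_poly n [set: G] p2 ->
     (forall x, J x -> p1 x = p2 x) -> p1 = p2).
Proof.
have hJ : subsg J by [].
split; [|split].
- move=> p [hc hp]; split; last by move=> s t _ _; exact: hp.
  exact: (continuous_subspaceW _ hc).
- move=> q [hqc hq0].
  have hq : polyJ n J q by [].
  have [wf hwf] : {wf : G -> G & forall g, J (wf g) /\ J (g + wf g)}.
    apply: (@choice G G (fun g w => J w /\ J (g + w))) => g; have [u [v [hu [hv ->]]]] := hJ_gen g.
    by exists v; rewrite subrK.
  exists (pext n q wf); split; [split|].
  + apply: continuous_subspaceT => g0.
    have [w0 hw0] := hJ_int.
    have [u [v [hu [hv hg0]]]] := hJ_gen g0.
    pose W := v + w0.
    have hw0J : J w0 := interior_subset hw0.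
    have hW : J W by apply: hJ.
    have hint : forall k, interior J (g0 + W *+ k.+1).
      move=> k; rewrite mulrS addrA hg0 /W addrA subrK.
      case: k => [|k]; first by rewrite mulr0n addr0; exact: (int_addJ' hJ hu hw0).
      apply: (int_addJ hJ (int_addJ' hJ hu hw0)).
      exact: sg_mulS.
    have h0 := hint 0%N; rewrite mulr1n in h0.
    have hnear : \forall x \near g0, J (x + W).
      exact: (@transl_cont _ W g0 _ h0).
    have heq : \forall x \near g0, Ext n (fun k => q (x + W *+ k)) = pext n q wf x.
      by apply: filterS hnear => x hx; symmetry; exact: (pextE hJ hq hwf hW hx).
    rewrite /continuous_at; apply: cvg_trans (near_eq_cvg heq) _.
    rewrite (pextE hJ hq hwf hW (interior_subset h0)) /Ext.
    apply: (@cvg_sumX R X G (nbhs g0) _ n.+1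
      (fun (k : nat) x => (- cf R[i] n k.+1) *: q (x + W *+ k.+1))
      (fun (k : nat) => (- cf R[i] n k.+1) *: q (g0 + W *+ k.+1))) => k.
    apply: cvg_scaleX.
    apply: (@continuous_comp _ _ _ (fun x => x + W *+ k.+1) q g0).
      exact: transl_cont.
    have := hqc (g0 + W *+ k.+1).
    by rewrite /continuous_at -nbhs_subspace_interior.
  + move=> s t _ _; apply: Dz_Poly => m.
    rewrite -[RHS](pext_diff hJ hq hwf hJ_gen (s + t *+ m) t) /Dz.
    by apply: eq_bigr => k _; rewrite mulrnDr addrA.
  + by move=> x hx; exact: (pext_J hJ hq hwf).
- move=> p1 p2 [_ h1] [_ h2] heq; apply: funext => g.
  have [u [v [hu [hv ->]]]] := hJ_gen g.
  have e1 := Poly_Ext (h1 (u - v) v I I).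
  have e2 := Poly_Ext (h2 (u - v) v I I).
  rewrite /= mulr0n addr0 in e1; rewrite /= mulr0n addr0 in e2.
  rewrite e1 e2; apply: eq_Ext => k; apply: heq.
  by rewrite mulrS addrA subrK; apply: sg_mul.
Qed.
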